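(* Let $n,p\ge1$ be integers, let $\mathbf{A}^{p+1}_{n+1}$ be as defined in the context, let $M=\max\{n+1,p\}$ and $s(x)=M.x^{M}$. Then $s(a)\vee\sim s(a)=\top$ for every $a\in A$, and $\mathrm{Rad}(\mathbf{A}^{p+1}_{n+1})=\{a\in A:s(a)=\top\}$. Consequently the identity $s(x)\vee\neg s(x)\approx\top$ holds in every algebra of the variety generated by $\mathbf{A}^{p+1}_{n+1}$.
   Context: Order $\mathbb{Z}\times\mathbb{Z}$ lexicographically: $(m,r)\preccurlyeq(k,s)$ iff $m<k$, or $m=k$ and $r\le s$; addition/subtraction of pairs is componentwise, and $\min,\max$ of pairs refer to $\preccurlyeq$. For an integer $n\ge1$ let $L^\omega_{n+1}=\{(m,r)\in\mathbb{Z}^2:(0,0)\preccurlyeq(m,r)\preccurlyeq(n,0)\}$ with $x\ast y=\max\{(0,0),x+y-(n,0)\}$ and $x\to y=\min\{(n,0),(n,0)-x+y\}$. For an integer $p\ge1$ let $L_{p+1}=\{0,1,\dots,p\}$ with $\alpha\ast\beta=\max\{0,\alpha+\beta-p\}$. Define $$A=A^{p+1}_{n+1}=\{\langle(m,r),\alpha\rangle:(m,r)\in L^\omega_{n+1},\ \alpha\in\{0,p\}\}\cup\{\langle(m,r),\alpha\rangle:(0,0)\preccurlyeq(m,r)\preccurlyeq(n-1,0),\ 0<\alpha<p\}.$$ Order: $\langle(m,r),\alpha\rangle\le\langle(k,s),\beta\rangle$ iff one of: (o1) $\alpha\neq0$, $\alpha\le\beta$ and $(m,r)\preccurlyeq(k,s)$;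 (o2) $\alpha=\beta=0$ and $(k,s)\preccurlyeq(m,r)$; (o3) $\alpha=0$, $\beta\ne0$ and $(n-1,0)\preccurlyeq(m+k,r+s)$. $\wedge,\vee$ denote meet and join for $\le$. Put $\bot=\langle(n,0),0\rangle$, $\top=\langle(n,0),p\rangle$. For $a=\langle(m,r),\alpha\rangle$, $b=\langle(k,s),\beta\rangle\in A$ define $a\odot b$ by: (P1) if $\alpha,\beta\ge1$ and $\alpha+\beta>p$: $a\odot b=\langle(m,r)\ast(k,s),\alpha+\beta-p\rangle$; (P2) if $\alpha,\beta\ge1$ and $\alpha+\beta\le p$: $a\odot b=\langle\min\{(n,0),(2n-(m+k+1),-(r+s))\},0\rangle$; (P3) if $\alpha\ge1$, $\beta=0$: $a\odot b=\langle(m,r)\to(k,s),0\rangle$, and if $\alpha=0$, $\beta\ge1$: $a\odot b=\langle(k,s)\to(m,r),0\rangle$; (P4) if $\alpha=\beta=0$: $a\odot b=\langle\min\{(n,0),(m+k+1,r+s)\},0\rangle$. Define $\sim\langle(m,r),\alpha\rangle=\langle(m,r),p-\alpha\rangle$ if $\alpha\in\{0,p\}$, and $\sim\langle(m,r),\alpha\rangle=\langle(n-1-m,-r),p-\alpha\rangle$ if $0<\alpha<p$. Define $a\Rightarrow b=\sim(a\odot\sim b)$ (so $\sim a=a\Rightarrow\bot$, interpreting $\neg x=x\to\bot$). The algebra $\mathbf{A}^{p+1}_{n+1}$ is $\langle A;\odot,\Rightarrow,\wedge,\vee,\bot,\top\rangle$, an algebra of type $(2,2,2,2,0,0)$ in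 the language $\langle\ast,\to,\wedge,\vee,\bot,\top\rangle$. Terms: $a^0=\top$, $a^{k+1}=a\odot a^k$; $a\oplus b=\sim(\sim a\odot\sim b)$; $0.a=\bot$, $(k+1).a=a\oplus k.a$. $\mathrm{Rad}$ is the intersection of all maximal proper implicative filters, where an implicative filter is a subset containing $\top$, closed under $\odot$ and upward closed. *)

(* Defs.v *)
From Stdlib Require Import ZArith Lia Bool ClassicalEpsilon.
Open Scope Z_scope.

Definition lexle (x y : Z * Z) : bool :=
  (fst x <? fst y) || ((fst x =? fst y) && (snd x <=? snd y)).
Definition lex (x y : Z * Z) : Prop := lexle x y = true.
Definition pmin (x y : Z * Z) : Z * Z := if lexle x y then x else y.
Definition pmax (x y : Z * Z) : Z * Z := if lexle x y then y else x.
Definition padd (x y : Z * Z) : Z * Z := (fst x + fst y, snd x + snd y).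
Definition psub (x y : Z * Z) : Z * Z := (fst x - fst y, snd x - snd y).

(* operations of L^omega_{n+1} *)
Definition pstar (n : Z) (x y : Z * Z) : Z * Z :=
  pmax (0, 0) (psub (padd x y) (n, 0)).
Definition parrow (n : Z) (x y : Z * Z) : Z * Z :=
  pmin (n, 0) (padd (psub (n, 0) x) y).

Record elt := mkE { epair : Z * Z; ealpha : Z }.

Definition inAb (n p : Z) (a : elt) : bool :=
  lexle (0, 0) (epair a) && lexle (epair a) (n, 0) &&
  ((ealpha a =? 0) || (ealpha a =? p) ||
   ((0 <? ealpha a) && (ealpha a <? p) && lexle (epair a) (n - 1, 0))).

Definition leE (n : Z) (a b : elt) : Prop :=
  (ealpha a <> 0 /\ ealpha a <= ealpha b /\ lex (epair a) (epair b))
  \/ (ealpha a = 0 /\ ealpha b = 0 /\ lex (epair b) (epair a))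
  \/ (ealpha a = 0 /\ ealpha b <> 0 /\ lex (n - 1, 0) (padd (epair a) (epair b))).

Definition odotE (n p : Z) (a b : elt) : elt :=
  let x := epair a in let y := epair b in
  let al := ealpha a in let be := ealpha b in
  if (1 <=? al) && (1 <=? be) then
    if p <? al + be then mkE (pstar n x y) (al + be - p)
    else mkE (pmin (n, 0) (2 * n - (fst x + fst y + 1), - (snd x + snd y))) 0
  else if (1 <=? al) && (be =? 0) then mkE (parrow n x y) 0
  else if (al =? 0) && (1 <=? be) then mkE (parrow n y x) 0
  else mkE (pmin (n, 0) (fst x + fst y + 1, snd x + snd y)) 0.

Definition negE (n p : Z) (a : elt) : elt :=
  if (ealpha a =? 0) || (ealpha a =? p) then mkE (epair a) (p - ealpha a)
  else mkE (n - 1 - fst (epair a), - snd (epair a)) (p - ealpha a).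

Definition impE (n p : Z) (a b : elt) : elt := negE n p (odotE n p a (negE n p b)).

Definition elt0 : elt := mkE (0, 0) 0.

Definition is_meet (n p : Z) (a b c : elt) : Prop :=
  inAb n p c = true /\ leE n c a /\ leE n c b /\
  forall d, inAb n p d = true -> leE n d a -> leE n d b -> leE n d c.
Definition is_join (n p : Z) (a b c : elt) : Prop :=
  inAb n p c = true /\ leE n a c /\ leE n b c /\
  forall d, inAb n p d = true -> leE n a d -> leE n b d -> leE n c d.
Definition meetE (n p : Z) (a b : elt) : elt :=
  epsilon (inhabits elt0) (is_meet n p a b).
Definition joinE (n p : Z) (a b : elt) : elt :=
  epsilon (inhabits elt0) (is_join n p a b).

Definition Acar (n p : Z) : Type := {a : elt | inAb n p a = true}.

(* lifting a binary operation to A; the fallback branch is never used, since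
   A is closed under all operations (this is part of what is to be proved). *)
Definition lift2 (n p : Z) (f : elt -> elt -> elt) (a b : Acar n p) : Acar n p :=
  match sumbool_of_bool (inAb n p (f (proj1_sig a) (proj1_sig b))) with
  | left H => exist _ _ H
  | right _ => a
  end.

Lemma bot_in (n p : Z) (hn : 1 <= n) : inAb n p (mkE (n, 0) 0) = true.
Proof.
  unfold inAb, lexle; simpl.
  replace (0 <? n) with true by (symmetry; apply Z.ltb_lt; lia).
  rewrite !Z.eqb_refl, !Z.leb_refl, !orb_true_r; reflexivity.
Qed.

Lemma top_in (n p : Z) (hn : 1 <= n) : inAb n p (mkE (n, 0) p) = true.
Proof.
  unfold inAb, lexle; simpl.
  replace (0 <? n) with true by (symmetry; apply Z.ltb_lt; lia).
  rewrite !Z.eqb_refl, !Z.leb_refl, !orb_true_r; reflexivity.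
Qed.

Definition botA (n p : Z) (hn : 1 <= n) : Acar n p := exist _ _ (bot_in n p hn).
Definition topA (n p : Z) (hn : 1 <= n) : Acar n p := exist _ _ (top_in n p hn).

Definition leA (n p : Z) (a b : Acar n p) : Prop := leE n (proj1_sig a) (proj1_sig b).

Record alg := Alg {
  car :> Type;
  amul : car -> car -> car;
  aimp : car -> car -> car;
  ameet : car -> car -> car;
  ajoin : car -> car -> car;
  abot : car;
  atop : car }.

Definition Aalg (n p : Z) (hn : 1 <= n) : alg :=
  Alg (Acar n p) (lift2 n p (odotE n p)) (lift2 n p (impE n p))
      (lift2 n p (meetE n p)) (lift2 n p (joinE n p)) (botA n p hn) (topA n p hn).

Definition aneg (B : alg) (x : B) : B := aimp B x (abot B).
Definition aoplus (B : alg) (x y : B) : B :=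
  aneg B (amul B (aneg B x) (aneg B y)).
Fixpoint apow (B : alg) (x : B) (k : nat) : B :=
  match k with O => atop B | S k' => amul B x (apow B x k') end.
Fixpoint atimes (B : alg) (k : nat) (x : B) : B :=
  match k with O => abot B | S k' => aoplus B x (atimes B k' x) end.
Definition sfun (B : alg) (M : nat) (x : B) : B := atimes B M (apow B x M).

Definition impl_filter (n p : Z) (hn : 1 <= n) (F : Acar n p -> Prop) : Prop :=
  F (topA n p hn) /\
  (forall x y, F x -> F y -> F (amul (Aalg n p hn) x y)) /\
  (forall x y, F x -> leA n p x y -> F y).
Definition proper_filter (n p : Z) (hn : 1 <= n) (F : Acar n p -> Prop) : Prop :=
  impl_filter n p hn F /\ exists x, ~ F x.
Definition maximal_filter (n p : Z) (hn : 1 <= n) (F : Acar n p -> Prop) : Prop :=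
  proper_filter n p hn F /\
  forall G, proper_filter n p hn G -> (forall x, F x -> G x) -> forall x, G x -> F x.
Definition Rad (n p : Z) (hn : 1 <= n) (a : Acar n p) : Prop :=
  forall F, maximal_filter n p hn F -> F a.

Definition in_variety (A B : alg) : Prop :=
  exists (I : Type) (S : (I -> car A) -> Prop) (h : (I -> car A) -> car B),
    (forall f g, S f -> S g -> S (fun i => amul A (f i) (g i))) /\
    (forall f g, S f -> S g -> S (fun i => aimp A (f i) (g i))) /\
    (forall f g, S f -> S g -> S (fun i => ameet A (f i) (g i))) /\
    (forall f g, S f -> S g -> S (fun i => ajoin A (f i) (g i))) /\
    S (fun _ => abot A) /\ S (fun _ => atop A) /\
    (forall y : car B, exists f, S f /\ h f = y) /\
    (forall f g, S f -> S g -> h (fun i => amul A (f i) (g i)) = amul B (h f) (h g)) /\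
    (forall f g, S f -> S g -> h (fun i => aimp A (f i) (g i)) = aimp B (h f) (h g)) /\
    (forall f g, S f -> S g -> h (fun i => ameet A (f i) (g i)) = ameet B (h f) (h g)) /\
    (forall f g, S f -> S g -> h (fun i => ajoin A (f i) (g i)) = ajoin B (h f) (h g)) /\
    h (fun _ => abot A) = abot B /\ h (fun _ => atop A) = atop B.

(* Main.v *)
Require Import Defs.
From Stdlib Require Import ZArith Lia Bool ClassicalEpsilon Eqdep_dec FunctionalExtensionality.
Open Scope Z_scope.

Lemma lexle_iff a b c d : lexle (a,b) (c,d) = true <-> a < c \/ (a = c /\ b <= d).
Proof. unfold lexle; simpl. rewrite orb_true_iff, andb_true_iff, Z.ltb_lt, Z.eqb_eq, Z.leb_le. tauto. Qed.
Lemma lexle_false a b c d : lexle (a,b) (c,d) = false <-> c < a \/ (a = c /\ d < b).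
Proof. split; intro H.
 - destruct (lexle (a,b) (c,d)) eqn:E; [discriminate|]. 
   assert (~ (a < c \/ (a = c /\ b <= d))) by (rewrite <- lexle_iff; congruence). lia.
 - destruct (lexle (a,b) (c,d)) eqn:E; [|reflexivity]. apply lexle_iff in E. lia. Qed.

Definition inP (n p m r al : Z) : Prop :=
  (0 < m \/ (m = 0 /\ 0 <= r)) /\ (m < n \/ (m = n /\ r <= 0)) /\
  (al = 0 \/ al = p \/ (0 < al /\ al < p /\ (m < n - 1 \/ (m = n - 1 /\ r <= 0)))).

Lemma inAb_iff n p m r al : 1 <= p -> inAb n p (mkE (m,r) al) = true <-> inP n p m r al.
Proof.
  intro hp. unfold inAb, inP; simpl.
  rewrite !andb_true_iff, !orb_true_iff, !andb_true_iff, !lexle_iff, !Z.eqb_eq, !Z.ltb_lt. lia.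
Qed.


Ltac prune := try (exfalso; lia).
Ltac splitall := repeat (match goal with
  | |- context [lexle (?a,?b) (?c,?d)] => let E := fresh "E" in
       destruct (lexle (a,b) (c,d)) eqn:E; [apply lexle_iff in E | apply lexle_false in E]; prune
  | |- context [?a <? ?b] => destruct (Z.ltb_spec a b); prune
  | |- context [?a =? ?b] => destruct (Z.eqb_spec a b); prune
  | |- context [?a <=? ?b] => destruct (Z.leb_spec a b); prune
  end; cbn [fst snd andb orb negb epair ealpha] in * ).

Lemma odot_closed n p m r al k s be : 1 <= n -> 1 <= p ->
  inP n p m r al -> inP n p k s be ->
  inAb n p (odotE n p (mkE (m,r) al) (mkE (k,s) be)) = true.
Proof.
  intros hn hp [La [Ua Ca]] [Lb [Ub Cb]].
  unfold odotE, pstar, parrow, pmin, pmax, padd, psub; cbn [fst snd epair ealpha].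
  destruct Ca as [->|[->|[? [? Ca]]]]; destruct Cb as [->|[->|[? [? Cb]]]];
  splitall; apply inAb_iff; auto; unfold inP in *; lia.
Qed.

Lemma neg_closed n p m r al : 1 <= n -> 1 <= p ->
  inP n p m r al -> inAb n p (negE n p (mkE (m,r) al)) = true.
Proof.
  intros hn hp [La [Ua Ca]]. unfold negE; cbn [fst snd epair ealpha].
  destruct Ca as [->|[->|[? [? Ca]]]]; splitall; apply inAb_iff; auto; unfold inP in *; lia.
Qed.

Lemma inAb_inP n p e : 1 <= p -> inAb n p e = true -> inP n p (fst (epair e)) (snd (epair e)) (ealpha e).
Proof. intros hp H. destruct e as [[m r] al]. apply inAb_iff in H; auto. Qed.

Lemma inAb_odot n p a b : 1 <= n -> 1 <= p -> inAb n p a = true -> inAb n p b = true ->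
  inAb n p (odotE n p a b) = true.
Proof.
  intros hn hp Ha Hb. destruct a as [[m r] al], b as [[k s] be].
  apply inAb_iff in Ha; apply inAb_iff in Hb; auto. apply odot_closed; auto.
Qed.

Lemma inAb_neg n p a : 1 <= n -> 1 <= p -> inAb n p a = true -> inAb n p (negE n p a) = true.
Proof.
  intros hn hp Ha. destruct a as [[m r] al]. apply inAb_iff in Ha; auto. apply neg_closed; auto.
Qed.

Lemma inAb_imp n p a b : 1 <= n -> 1 <= p -> inAb n p a = true -> inAb n p b = true ->
  inAb n p (impE n p a b) = true.
Proof.
  intros. unfold impE. apply inAb_neg; auto. apply inAb_odot; auto. apply inAb_neg; auto.
Qed.

Lemma mkE_eq a b c d e f : a = d -> b = e -> c = f -> mkE (a,b) c = mkE (d,e) f.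
Proof. intros; subst; reflexivity. Qed.

Definition inL (n m r : Z) : Prop := (0 < m \/ (m = 0 /\ 0 <= r)) /\ (m < n \/ (m = n /\ r <= 0)).

Definition rneg n p x := impE n p x (mkE (n,0) 0).
Definition roplus n p x y := rneg n p (odotE n p (rneg n p x) (rneg n p y)).
Fixpoint rpow n p x k := match k with O => mkE (n,0) p | S k' => odotE n p x (rpow n p x k') end.
Fixpoint rtimes n p k x := match k with O => mkE (n,0) 0 | S k' => roplus n p x (rtimes n p k' x) end.

Ltac comp := unfold rneg, roplus, impE, negE, odotE, pstar, parrow, pmin, pmax, padd, psub;
  cbn [fst snd epair ealpha]; splitall.

Lemma rneg_p n p m r : 1 <= n -> 1 <= p -> inL n m r -> rneg n p (mkE (m,r) p) = mkE (m,r) 0.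
Proof. intros hn hp [H1 H2]. comp; apply mkE_eq; lia. Qed.

Lemma rneg_0 n p m r : 1 <= n -> 1 <= p -> inL n m r -> rneg n p (mkE (m,r) 0) = mkE (m,r) p.
Proof. intros hn hp [H1 H2]. comp; apply mkE_eq; lia. Qed.

Lemma odot_00 n p m r k s : odotE n p (mkE (m,r) 0) (mkE (k,s) 0) = mkE (pmin (n,0) (m+k+1, r+s)) 0.
Proof. unfold odotE; cbn [fst snd epair ealpha]. reflexivity. Qed.

Lemma odot_0top n p m r : 1 <= p -> inL n m r -> odotE n p (mkE (m,r) 0) (mkE (n,0) p) = mkE (m,r) 0.
Proof. intros hp [H1 H2]. comp; apply mkE_eq; lia. Qed.

Definition geq (c k s : Z) : Prop := c < k \/ (c = k /\ 0 <= s).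

Lemma times_base n p m r : 1 <= n -> 1 <= p -> inL n m r ->
  roplus n p (mkE (m,r) p) (mkE (n,0) 0) = mkE (m,r) p.
Proof.
  intros hn hp H. unfold roplus. rewrite rneg_p, rneg_0, odot_0top, rneg_0; auto;
  unfold inL in *; lia.
Qed.

Lemma times_step n p m r k s c : 1 <= n -> 1 <= p -> inL n m r -> inL n k s -> geq c k s ->
  exists k' s', roplus n p (mkE (m,r) p) (mkE (k,s) p) = mkE (k',s') p /\ inL n k' s' /\
     geq (Z.min n (c+1)) k' s'.
Proof.
  intros hn hp H1 H2 H3. unfold roplus. rewrite (rneg_p n p m r), (rneg_p n p k s), odot_00; auto.
  unfold pmin. destruct (lexle (n,0) (m+k+1, r+s)) eqn:E;
  [apply lexle_iff in E | apply lexle_false in E]; rewrite rneg_0; auto;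
  try (unfold inL, geq in *; lia); do 2 eexists; split; try reflexivity; unfold inL, geq in *; lia.
Qed.

Lemma times_inv n p m r : 1 <= n -> 1 <= p -> inL n m r -> forall j : nat,
  exists m' r', rtimes n p (S j) (mkE (m,r) p) = mkE (m',r') p /\ inL n m' r' /\
    geq (Z.min n (Z.of_nat j)) m' r'.
Proof.
  intros hn hp H j. induction j as [|j IH].
  - exists m, r. simpl rtimes. rewrite times_base; auto. split; auto. unfold inL, geq in *; lia.
  - destruct IH as [m' [r' [E [H1 H2]]]].
    change (rtimes n p (S (S j)) (mkE (m,r) p)) with (roplus n p (mkE (m,r) p) (rtimes n p (S j) (mkE (m,r) p))).
    rewrite E. destruct (times_step n p m r m' r' (Z.min n (Z.of_nat j))) as [k' [s' [E' [H3 H4]]]]; auto.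
    exists k', s'. split; auto. split; auto. unfold geq in *; lia.
Qed.

Lemma odot_pp n p m r k s : 1 <= n -> 1 <= p -> inL n m r -> inL n k s ->
  exists m' r', odotE n p (mkE (m,r) p) (mkE (k,s) p) = mkE (m',r') p /\ inL n m' r'.
Proof.
  intros hn hp H1 H2. comp; do 2 eexists; (split; [apply mkE_eq; [reflexivity|reflexivity|lia] | unfold inL in *; lia]).
Qed.

Lemma pow_p n p m r : 1 <= n -> 1 <= p -> inL n m r -> forall k : nat,
  exists m' r', rpow n p (mkE (m,r) p) k = mkE (m',r') p /\ inL n m' r'.
Proof.
  intros hn hp H k. induction k as [|k IH].
  - exists n, 0. split; auto. unfold inL; lia.
  - destruct IH as [m' [r' [E H1]]]. simpl rpow. rewrite E. apply odot_pp; auto.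
Qed.

Lemma sval_p n p m r (M : nat) : 1 <= n -> 1 <= p -> inL n m r -> n + 1 <= Z.of_nat M ->
  rtimes n p M (rpow n p (mkE (m,r) p) M) = mkE (n,0) p.
Proof.
  intros hn hp H HM. destruct (pow_p n p m r hn hp H M) as [m' [r' [E H1]]]. rewrite E.
  destruct M as [|j]; [lia|].
  destruct (times_inv n p m' r' hn hp H1 j) as [k' [s' [E' [H2 H3]]]]. rewrite E'.
  apply mkE_eq; unfold inL, geq in *; lia.
Qed.

Definition Inv n p al K e :=
 (exists y1 y2 b, e = mkE (y1,y2) b /\ 0 < al /\ 1 <= b /\ b <= p - K /\
     (0 < y1 \/ (y1 = 0 /\ 0 <= y2)) /\ (y1 < Z.max 0 (n-K) \/ (y1 = Z.max 0 (n-K) /\ y2 <= 0)))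
 \/ (exists z1 z2, e = mkE (z1,z2) 0 /\ geq (Z.min n (K-1)) z1 z2 /\ (z1 < n \/ (z1 = n /\ z2 <= 0))).

Ltac inv_fin :=
  first [ left; do 3 eexists; split; [apply mkE_eq; reflexivity | unfold inP, inL, geq in *; lia]
        | right; do 2 eexists; split; [apply mkE_eq; reflexivity | unfold inP, inL, geq in *; lia] ].

Lemma pow_base n p m r al : 1 <= n -> 1 <= p -> inP n p m r al -> al < p ->
  Inv n p al 1 (odotE n p (mkE (m,r) al) (mkE (n,0) p)).
Proof.
  intros hn hp H Hal. unfold Inv. comp; inv_fin.
Qed.

Lemma pow_step n p m r al K e : 1 <= n -> 1 <= p -> inP n p m r al -> al < p -> 1 <= K ->
  Inv n p al K e -> Inv n p al (K+1) (odotE n p (mkE (m,r) al) e).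
Proof.
  intros hn hp H Hal HK [[y1 [y2 [b [-> Hb]]]] | [z1 [z2 [-> Hz]]]]; unfold Inv; comp; inv_fin.
Qed.

Lemma pow_inv n p m r al : 1 <= n -> 1 <= p -> inP n p m r al -> al < p -> forall k : nat,
  Inv n p al (Z.of_nat (S k)) (rpow n p (mkE (m,r) al) (S k)).
Proof.
  intros hn hp H Hal k. induction k as [|k IH].
  - apply pow_base; auto.
  - change (rpow n p (mkE (m,r) al) (S (S k))) with (odotE n p (mkE (m,r) al) (rpow n p (mkE (m,r) al) (S k))).
    replace (Z.of_nat (S (S k))) with (Z.of_nat (S k) + 1) by lia.
    apply pow_step; auto; lia.
Qed.

Lemma inv_end n p al K e : 1 <= n -> 1 <= p -> p <= K -> n + 1 <= K -> Inv n p al K e -> e = mkE (n,0) 0.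
Proof.
  intros hn hp H1 H2 [[y1 [y2 [b [-> Hb]]]] | [z1 [z2 [-> Hz]]]].
  - exfalso; lia.
  - apply mkE_eq; unfold geq in *; lia.
Qed.

Lemma rtimes_bot n p k : 1 <= n -> 1 <= p -> rtimes n p k (mkE (n,0) 0) = mkE (n,0) 0.
Proof.
  intros hn hp. induction k as [|k IH]; [reflexivity|].
  simpl rtimes. rewrite IH. unfold roplus. rewrite rneg_0 by (auto; unfold inL; lia).
  replace (odotE n p (mkE (n,0) p) (mkE (n,0) p)) with (mkE (n,0) p).
  - rewrite rneg_p; auto; unfold inL; lia.
  - comp; apply mkE_eq; lia.
Qed.

Lemma sval_np n p m r al (M : nat) : 1 <= n -> 1 <= p -> inP n p m r al -> al <> p ->
  n + 1 <= Z.of_nat M -> p <= Z.of_nat M ->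
  rpow n p (mkE (m,r) al) M = mkE (n,0) 0 /\
  rtimes n p M (rpow n p (mkE (m,r) al) M) = mkE (n,0) 0.
Proof.
  intros hn hp H Hal H1 H2.
  assert (al < p) by (unfold inP in H; lia).
  destruct M as [|j]; [lia|].
  assert (E : rpow n p (mkE (m,r) al) (S j) = mkE (n,0) 0)
    by (eapply inv_end; [| | | | apply pow_inv]; eauto).
  rewrite E. split; auto. apply rtimes_bot; auto.
Qed.

Lemma sig_eq n p (a b : Acar n p) : proj1_sig a = proj1_sig b -> a = b.
Proof.
  destruct a as [a Ha], b as [b Hb]; simpl; intros ->. f_equal. apply UIP_dec, bool_dec.
Qed.

Lemma lift2_val n p f (a b : Acar n p) : inAb n p (f (proj1_sig a) (proj1_sig b)) = true ->
  proj1_sig (lift2 n p f a b) = f (proj1_sig a) (proj1_sig b).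
Proof.
  intro H. unfold lift2. destruct (sumbool_of_bool _) as [e|e]; [reflexivity|congruence].
Qed.

Lemma mul_val n p hn (hp : 1 <= p) (a b : Acar n p) :
  proj1_sig (amul (Aalg n p hn) a b) = odotE n p (proj1_sig a) (proj1_sig b).
Proof. apply lift2_val. apply inAb_odot; auto; apply proj2_sig. Qed.

Lemma imp_val n p hn (hp : 1 <= p) (a b : Acar n p) :
  proj1_sig (aimp (Aalg n p hn) a b) = impE n p (proj1_sig a) (proj1_sig b).
Proof. apply lift2_val. apply inAb_imp; auto; apply proj2_sig. Qed.

Lemma neg_val n p hn (hp : 1 <= p) (a : Acar n p) :
  proj1_sig (aneg (Aalg n p hn) a) = rneg n p (proj1_sig a).
Proof. unfold aneg. rewrite imp_val; auto. Qed.

Lemma oplus_val n p hn (hp : 1 <= p) (a b : Acar n p) :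
  proj1_sig (aoplus (Aalg n p hn) a b) = roplus n p (proj1_sig a) (proj1_sig b).
Proof. unfold aoplus. rewrite neg_val, mul_val, !neg_val; auto. Qed.

Lemma pow_val n p hn (hp : 1 <= p) (a : Acar n p) k :
  proj1_sig (apow (Aalg n p hn) a k) = rpow n p (proj1_sig a) k.
Proof.
  induction k as [|k IH]; [reflexivity|].
  change (apow (Aalg n p hn) a (S k)) with (amul (Aalg n p hn) a (apow (Aalg n p hn) a k)).
  rewrite mul_val, IH; auto.
Qed.

Lemma times_val n p hn (hp : 1 <= p) (a : Acar n p) k :
  proj1_sig (atimes (Aalg n p hn) k a) = rtimes n p k (proj1_sig a).
Proof.
  induction k as [|k IH]; [reflexivity|].
  change (atimes (Aalg n p hn) (S k) a) with (aoplus (Aalg n p hn) a (atimes (Aalg n p hn) k a)).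
  rewrite oplus_val, IH; auto.
Qed.

Lemma s_cases n p hn (hp : 1 <= p) (M : nat) (a : Acar n p) :
  n + 1 <= Z.of_nat M -> p <= Z.of_nat M ->
  (ealpha (proj1_sig a) = p /\ sfun (Aalg n p hn) M a = topA n p hn) \/
  (ealpha (proj1_sig a) <> p /\ sfun (Aalg n p hn) M a = botA n p hn /\
     apow (Aalg n p hn) a M = botA n p hn).
Proof.
  intros H1 H2. unfold sfun.
  destruct a as [[[m r] al] Ha] eqn:Ea. pose proof Ha as Ha'. apply inAb_iff in Ha'; auto.
  destruct (Z.eq_dec al p) as [->|Hne].
  - left. split; [reflexivity|]. apply sig_eq. rewrite times_val, pow_val; auto. simpl.
    apply sval_p; auto. unfold inP, inL in *; lia.
  - right. destruct (sval_np n p m r al M hn hp Ha' Hne H1 H2) as [E1 E2].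
    split; [exact Hne|]. split; apply sig_eq.
    + rewrite times_val, pow_val; auto.
    + rewrite pow_val; auto.
Qed.

Lemma leE_top_inv n p c : 1 <= n -> 1 <= p -> inAb n p c = true -> leE n (mkE (n,0) p) c -> c = mkE (n,0) p.
Proof.
  intros hn hp Hc H. destruct c as [[k s] be]. apply inAb_iff in Hc; auto.
  unfold leE, lex in H; cbn [epair ealpha fst snd padd] in H.
  destruct H as [[H1 [H2 H3]]|[[H1 _]|[H1 _]]]; try lia.
  apply lexle_iff in H3. apply mkE_eq; unfold inP in *; lia.
Qed.

Lemma leE_bot n p d : 1 <= n -> 1 <= p -> inAb n p d = true -> leE n (mkE (n,0) 0) d.
Proof.
  intros hn hp Hd. destruct d as [[k s] be]. apply inAb_iff in Hd; auto.
  unfold leE, lex; cbn [epair ealpha fst snd padd].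
  destruct (Z.eq_dec be 0) as [->|Hb].
  - right; left. split; [reflexivity|]. split; [reflexivity|]. apply lexle_iff. unfold inP in *; cbn [fst snd]; lia.
  - right; right. split; [reflexivity|]. split; [exact Hb|]. apply lexle_iff. unfold inP in *. cbn [fst snd]; lia.
Qed.

Lemma leE_top n p c : 1 <= n -> 1 <= p -> inAb n p c = true -> leE n c (mkE (n,0) p).
Proof.
  intros hn hp Hc. destruct c as [[k s] be]. apply inAb_iff in Hc; auto.
  unfold leE, lex; cbn [epair ealpha fst snd padd].
  destruct (Z.eq_dec be 0) as [->|Hb].
  - right; right. split; [reflexivity|]. split; [lia|]. apply lexle_iff. unfold inP in *; cbn [fst snd]; lia.
  - left. split; [exact Hb|]. split; [unfold inP in *; lia|]. apply lexle_iff. unfold inP in *; cbn [fst snd]; lia.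
Qed.

Lemma join_top n p x y : 1 <= n -> 1 <= p -> inAb n p x = true -> inAb n p y = true ->
  (x = mkE (n,0) p \/ y = mkE (n,0) p) -> joinE n p x y = mkE (n,0) p /\ inAb n p (joinE n p x y) = true.
Proof.
  intros hn hp Hx Hy Hxy.
  assert (Hj : is_join n p x y (mkE (n,0) p)).
  { split; [apply top_in; auto|]. split; [apply leE_top; auto|]. split; [apply leE_top; auto|].
    intros d Hd H1 H2. destruct Hxy as [->| ->]; assumption. }
  assert (Hs := epsilon_spec (inhabits elt0) (is_join n p x y) (ex_intro _ _ Hj)).
  fold (joinE n p x y) in Hs. destruct Hs as [Hin [H1 [H2 _]]].
  split; auto. apply leE_top_inv; auto. destruct Hxy as [<-|<-]; auto.
Qed.

Lemma join_val_top n p hn (hp : 1 <= p) (a b : Acar n p) : (a = topA n p hn \/ b = topA n p hn) ->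
  ajoin (Aalg n p hn) a b = topA n p hn.
Proof.
  intro H. apply sig_eq.
  destruct (join_top n p (proj1_sig a) (proj1_sig b) hn hp (proj2_sig a) (proj2_sig b)) as [E Hin].
  { destruct H as [->| ->]; [left|right]; reflexivity. }
  cbn [ajoin Aalg]. rewrite lift2_val; auto.
Qed.

Lemma neg_bot n p hn (hp : 1 <= p) : aneg (Aalg n p hn) (botA n p hn) = topA n p hn.
Proof. apply sig_eq. rewrite neg_val; auto. simpl. apply rneg_0; auto. unfold inL; lia. Qed.

Definition F0 n p (x : Acar n p) : Prop := ealpha (proj1_sig x) = p.

Lemma F0_filter n p hn (hp : 1 <= p) : impl_filter n p hn (F0 n p).
Proof.
  split; [reflexivity|]. split.
  - intros x y. unfold F0. rewrite mul_val; auto.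
    destruct x as [[[m r] al] Hx], y as [[[k s] be] Hy]. simpl. intros -> ->.
    apply inAb_iff in Hx; apply inAb_iff in Hy; auto.
    destruct (odot_pp n p m r k s) as [m' [r' [-> _]]]; auto; unfold inP, inL in *; lia.
  - intros [[[m r] al] Hx] [[[k s] be] Hy]. unfold F0, leA, leE; simpl. intros ->.
    apply inAb_iff in Hy; auto. unfold inP in Hy. lia.
Qed.

Lemma proper_sub n p hn (hp : 1 <= p) G : proper_filter n p hn G -> forall x, G x -> F0 n p x.
Proof.
  intros [[Gt [Gm Gu]] [z Hz]] x Gx.
  set (M := Z.to_nat (Z.max (n+1) p)).
  assert (HM1 : n + 1 <= Z.of_nat M) by (unfold M; lia).
  assert (HM2 : p <= Z.of_nat M) by (unfold M; lia).
  assert (Gp : forall k, G (apow (Aalg n p hn) x k)).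
  { induction k as [|k IH]; [exact Gt|]. apply Gm; auto. }
  destruct (s_cases n p hn hp M x HM1 HM2) as [[H _]|[H [_ H2]]]; [exact H|].
  exfalso. apply Hz. apply (Gu (botA n p hn) z).
  - rewrite <- H2. apply Gp.
  - unfold leA. apply (leE_bot n p); auto. apply proj2_sig.
Qed.

Lemma F0_max n p hn (hp : 1 <= p) : maximal_filter n p hn (F0 n p).
Proof.
  split.
  - split; [apply F0_filter; auto|]. exists (botA n p hn). unfold F0; simpl. lia.
  - intros G HG _ x Gx. apply (proper_sub n p hn hp G HG x Gx).
Qed.


Lemma var_hom (A B : alg) (I : Type) (S : (I -> car A) -> Prop) (h : (I -> car A) -> car B)
  (Smul : forall f g, S f -> S g -> S (fun i => amul A (f i) (g i)))
  (Simp : forall f g, S f -> S g -> S (fun i => aimp A (f i) (g i)))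
  (Sbot : S (fun _ => abot A)) (Stop : S (fun _ => atop A))
  (hmul : forall f g, S f -> S g -> h (fun i => amul A (f i) (g i)) = amul B (h f) (h g))
  (himp : forall f g, S f -> S g -> h (fun i => aimp A (f i) (g i)) = aimp B (h f) (h g))
  (hbot : h (fun _ => abot A) = abot B) (htop : h (fun _ => atop A) = atop B) :
  forall M f, S f ->
   (S (fun i => sfun A M (f i)) /\ h (fun i => sfun A M (f i)) = sfun B M (h f)) /\
   (S (fun i => aneg A (sfun A M (f i))) /\ h (fun i => aneg A (sfun A M (f i))) = aneg B (sfun B M (h f))).
Proof.
  assert (Hneg : forall g, S g -> S (fun i => aneg A (g i)) /\ h (fun i => aneg A (g i)) = aneg B (h g)).
  { intros g Hg. unfold aneg. split.
    - apply (Simp g (fun _ => abot A)); auto.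
    - rewrite (himp g (fun _ => abot A)); auto. rewrite hbot; reflexivity. }
  assert (Hop : forall f g, S f -> S g -> S (fun i => aoplus A (f i) (g i)) /\
                  h (fun i => aoplus A (f i) (g i)) = aoplus B (h f) (h g)).
  { intros f g Hf Hg. unfold aoplus.
    destruct (Hneg f Hf) as [S1 E1]. destruct (Hneg g Hg) as [S2 E2].
    pose proof (Smul _ _ S1 S2) as S3. pose proof (hmul _ _ S1 S2) as E3.
    destruct (Hneg _ S3) as [S4 E4]. split; [exact S4|]. cbn beta in E4. rewrite E4, E3, E1, E2. reflexivity. }
  assert (Hpow : forall f, S f -> forall k, S (fun i => apow A (f i) k) /\ h (fun i => apow A (f i) k) = apow B (h f) k).
  { intros f Hf k. induction k as [|k [IH1 IH2]]; [split; auto|].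
    simpl apow. split; [apply (Smul f (fun i => apow A (f i) k)); auto|].
    rewrite (hmul f (fun i => apow A (f i) k)); auto. rewrite IH2; reflexivity. }
  assert (Htimes : forall f, S f -> forall k, S (fun i => atimes A k (f i)) /\ h (fun i => atimes A k (f i)) = atimes B k (h f)).
  { intros f Hf k. induction k as [|k [IH1 IH2]]; [split; auto|].
    simpl atimes. destruct (Hop f (fun i => atimes A k (f i)) Hf IH1) as [S1 E1]. split; auto.
    rewrite E1, IH2. reflexivity. }
  intros M f Hf. unfold sfun.
  destruct (Hpow f Hf M) as [S1 E1]. destruct (Htimes _ S1 M) as [S2 E2]. cbn beta in S2, E2.
  rewrite E1 in E2. split; [split; auto|].
  destruct (Hneg _ S2) as [S3 E3]. split; auto. rewrite E3, E2. reflexivity.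
Qed.

Theorem corollary3p7 (n p : Z) (hn : 1 <= n) (hp : 1 <= p) :
  let A := Aalg n p hn in
  let M := Z.to_nat (Z.max (n + 1) p) in
  (forall a : car A, ajoin A (sfun A M a) (aneg A (sfun A M a)) = atop A) /\
  (forall a : car A, Rad n p hn a <-> sfun A M a = atop A) /\
  (forall B : alg, in_variety A B ->
     forall x : car B, ajoin B (sfun B M x) (aneg B (sfun B M x)) = atop B).
Proof.
  intros A M.
  assert (HM1 : n + 1 <= Z.of_nat M) by (unfold M; lia).
  assert (HM2 : p <= Z.of_nat M) by (unfold M; lia).
  assert (P1 : forall a : car A, ajoin A (sfun A M a) (aneg A (sfun A M a)) = atop A).
  { intro a. unfold A. destruct (s_cases n p hn hp M a HM1 HM2) as [[_ E]|[_ [E _]]]; rewrite E;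
    apply join_val_top; auto. right. apply neg_bot; auto. }
  split; [exact P1|]. split.
  - intro a. split.
    + intro HR. pose proof (HR (F0 n p) (F0_max n p hn hp)) as H.
      destruct (s_cases n p hn hp M a HM1 HM2) as [[_ E]|[H' _]]; [exact E|]. contradiction.
    + intros E F [HF Fmax].
      assert (Ha : F0 n p a).
      { destruct (s_cases n p hn hp M a HM1 HM2) as [[H _]|[_ [E' _]]]; [exact H|].
        exfalso. unfold A in E. rewrite E' in E. apply (f_equal (fun x => ealpha (proj1_sig x))) in E.
        simpl in E. lia. }
      apply (Fmax (F0 n p)); auto.
      * apply F0_max; auto.
      * apply (proper_sub n p hn hp F HF).
  - intros B [I [S [h [Smul [Simp [Smeet [Sjoin [Sbot [Stop [Hsurj [hmul [himp [hmeet [hjoin [hbot htop]]]]]]]]]]]]]]] x.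
    destruct (Hsurj x) as [f [Hf <-]].
    destruct (var_hom A B I S h Smul Simp Sbot Stop hmul himp hbot htop M f Hf) as [[S1 E1] [S2 E2]].
    rewrite <- E2, <- E1, <- hjoin; auto.
    rewrite <- htop. f_equal. apply functional_extensionality. intro i. apply P1.
Qed.
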